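(* Algorithm $\mathsf{AG}$ (described in the context) implements an asymmetric gather protocol, i.e., it satisfies the Common Core, Validity and Agreement properties defined in the context.
   Context: System model: a finite set $\mathcal{P}=\{p_1,\dots,p_n\}$ of processes communicating asynchronously over authenticated point-to-point links; every message sent from a correct process to a correct process is eventually delivered. A process that follows its protocol is correct; others (faulty, Byzantine) may behave arbitrarily. $F\subseteq\mathcal{P}$ denotes the (unknown) set of faulty processes of an execution. For $\mathcal{A}\subseteq 2^{\mathcal{P}}$, write $\mathcal{A}^*=\{A' : A'\subseteq A,\ A\in\mathcal{A}\}$. An asymmetric fail-prone system is an array $\mathbb{F}=[\mathcal{F}_1,\dots,\mathcal{F}_n]$ with $\mathcal{F}_i\subseteq 2^{\mathcal{P}}$. An asymmetric Byzantine quorum system for $\mathbb{F}$ is an array $\mathbb{Q}=[\mathcal{Q}_1,\dots,\mathcal{Q}_n]$ with $\mathcal{Q}_i\subseteq 2^{\mathcal{P}}$ (quorums for $p_i$) satisfying: (consistency) for all $i,j$, all $Q_i\in\mathcal{Q}_i$, $Q_j\in\mathcal{Q}_j$, $F_{ij}\in\mathcal{F}_i^*\cap\mathcal{F}_j^*$: $Q_i\cap Q_j\not\subseteq F_{ij}$; (availability) for all $i$ and $F_i\in\mathcal{F}_i$ there is $Q_i\in\mathcal{Q}_i$ with $F_i\cap Q_i=\emptyset$. A kernel for $p_i$ is a set $K\subseteq\mathcal{P}$ intersecting every $Q\in\mathcal{Q}_i$; $\mathcal{K}_i$ is the set of kernels for $p_i$. A correct process $p_i$ is wise if $F\in\mathcal{F}_i^*$.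 A guild is a set $\mathcal{G}$ of wise processes such that every $p_i\in\mathcal{G}$ has some $Q_i\in\mathcal{Q}_i$ with $Q_i\subseteq\mathcal{G}$. An execution with a guild is one in which a nonempty guild exists; the maximal guild $\mathcal{G}_{max}$ is the union of all guilds. Asymmetric reliable broadcast (arb-broadcast / arb-deliver) guarantees, in every execution with a guild: if a correct process arb-broadcasts $m$, every process of $\mathcal{G}_{max}$ eventually arb-delivers $m$; for each sender, all processes of $\mathcal{G}_{max}$ that arb-deliver from it deliver the same message; if some process of $\mathcal{G}_{max}$ arb-delivers a message from a sender, all processes of $\mathcal{G}_{max}$ eventually arb-deliver a message from that sender; a correct process arb-delivers at most one message per sender, and from a correct sender only a message it arb-broadcast. Algorithm $\mathsf{AG}$ (code of $p_i$; each correct process invokes ag-propose$(x_i)$ exactly once; each guarded ''upon there being ...'' action executes at most once, message handlers once per message). State: sets $S_i,T_i,U_i$ initially empty, boolean $sentT$ initially false. (1) Upon ag-propose$(x_i)$: arb-broadcast $(p_i,x_i)$. (2) Upon arb-delivering $(p_j,x_j)$ from $p_j$: $S_i\gets S_i\cup\{(p_j,x_j)\}$. (3) Upon there being $Q\in\mathcal{Q}_i$ such that for every $p_j\in Q$ some pair $(p_j,\cdot)\in S_i$: send $\langle\mathrm{DistributeS},p_i,S_i\rangle$ to all. (4) For a received $\langle\mathrm{DistributeS},p_j,S_j\rangle$: once $S_j\subseteq S_i$, provided $sentT$ is false at that moment, set $T_i\gets T_i\cup S_j$ and send $\langle\mathrm{Ack},p_i\rangle$ to $p_j$. (5) Upon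 Ack received from every member of some $Q\in\mathcal{Q}_i$: send Ready to all. (6) Upon Ready received from every member of some $Q\in\mathcal{Q}_i$: send Confirm to all. (7) Upon Confirm received from every member of some $K\in\mathcal{K}_i$: send Confirm to all. (8) Upon Confirm received from every member of some $Q\in\mathcal{Q}_i$: send $\langle\mathrm{DistributeT},p_i,T_i\rangle$ to all and set $sentT\gets$ true. (9) For a received $\langle\mathrm{DistributeT},p_j,T_j\rangle$ from $p_j$: once $T_j\subseteq S_i$, set $U_i\gets U_i\cup T_j$. (10) Upon DistributeT received from every member of some $Q\in\mathcal{Q}_i$: ag-deliver$(U_i)$. Asymmetric gather (interface ag-propose$(x)$ / ag-deliver$(U)$, where $U$ is a set of pairs $(p_j,x_j)$ meaning $p_j$ ag-proposed $x_j$) requires: (Common Core) in any execution with a guild, there exists a set $S^+$ composed of the values ag-proposed by the processes of some quorum $Q_i\in\mathcal{Q}_i$ of some process $p_i$ in the maximal guild, such that every process of the maximal guild that ag-delivers a set $U$ has $S^+\subseteq U$; (Validity) in any execution with a guild, if a process in the maximal guild includes $(p_j,x_j)$ in its ag-delivered set and $p_j$ is wise, then $p_j$ ag-proposed $x_j$; (Agreement) in any execution with a guild, for any two sets $U,U'$ ag-delivered by processes in the maximal guild, if $(p_j,x)\in U$ and $(p_j,x')\in U'$ then $x=x'$. *)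

(* Defs.v *)
From Stdlib Require List.
From mathcomp Require Import all_boot.
Set Implicit Arguments.
Unset Strict Implicit.
Unset Printing Implicit Defensive.

Section Trust.
Variable n : nat.
Local Notation P := 'I_n.

Definition star (A : {set {set P}}) : {set {set P}} :=
  [set B : {set P} | [exists A0 in A, B \subset A0]].

Definition asym_quorum_system (Fs Qs : P -> {set {set P}}) : Prop :=
  (forall (i j : P) (Qi Qj Fij : {set P}),
      Qi \in Qs i -> Qj \in Qs j -> Fij \in star (Fs i) -> Fij \in star (Fs j) ->
      ~~ (Qi :&: Qj \subset Fij))
  /\ (forall (i : P) (Fi : {set P}), Fi \in Fs i ->
      exists2 Qi, Qi \in Qs i & Fi :&: Qi = set0).

Definition kernel (Qs : P -> {set {set P}}) (i : P) (K : {set P}) : bool :=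
  [forall Q in Qs i, K :&: Q != set0].

Definition wise (Fs : P -> {set {set P}}) (F : {set P}) (i : P) : bool :=
  (i \notin F) && (F \in star (Fs i)).

Definition guild (Fs Qs : P -> {set {set P}}) (F : {set P}) (G : {set P}) : bool :=
  [forall i in G, wise Fs F i] && [forall i in G, [exists Q in Qs i, Q \subset G]].

Definition Gmax (Fs Qs : P -> {set {set P}}) (F : {set P}) : {set P} :=
  [set i | [exists G : {set P}, guild Fs Qs F G && (i \in G)]].

Definition with_guild (Fs Qs : P -> {set {set P}}) (F : {set P}) : Prop :=
  exists G : {set P}, guild Fs Qs F G && (G != set0).

End Trust.

Section Model.
Variable n : nat.
Local Notation P := 'I_n.
Variable V : eqType.

(* point-to-point messages of AG (the link sender is authenticated, so the
   redundant sender-identity fields of the paper are carried by the link) *)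
Inductive msg :=
| MDistS of seq (P * V)
| MAck
| MReady
| MConfirm
| MDistT of seq (P * V).

Record lstate := LState {
  proposed : bool;
  Sset : seq (P * V);
  Tset : seq (P * V);
  Uset : seq (P * V);
  sentT : bool;
  sentDS : bool;
  sentReady : bool;
  sentC6 : bool;
  sentC7 : bool;
  delivered : option (seq (P * V));
  rcvd : seq (P * msg);
  todoS : seq (P * seq (P * V));    (* received, not yet handled DistributeS *)
  todoT : seq (P * seq (P * V));    (* received, not yet handled DistributeT *)
  dtFrom : seq P                    (* senders of handled DistributeT *)
}.

Definition set_proposed l b := LState b (Sset l) (Tset l) (Uset l) (sentT l) (sentDS l)
  (sentReady l) (sentC6 l) (sentC7 l) (delivered l) (rcvd l) (todoS l) (todoT l) (dtFrom l).
Definition set_S l s := LState (proposed l) s (Tset l) (Uset l) (sentT l) (sentDS l)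
  (sentReady l) (sentC6 l) (sentC7 l) (delivered l) (rcvd l) (todoS l) (todoT l) (dtFrom l).
Definition set_T l s := LState (proposed l) (Sset l) s (Uset l) (sentT l) (sentDS l)
  (sentReady l) (sentC6 l) (sentC7 l) (delivered l) (rcvd l) (todoS l) (todoT l) (dtFrom l).
Definition set_U l s := LState (proposed l) (Sset l) (Tset l) s (sentT l) (sentDS l)
  (sentReady l) (sentC6 l) (sentC7 l) (delivered l) (rcvd l) (todoS l) (todoT l) (dtFrom l).
Definition set_sentT l b := LState (proposed l) (Sset l) (Tset l) (Uset l) b (sentDS l)
  (sentReady l) (sentC6 l) (sentC7 l) (delivered l) (rcvd l) (todoS l) (todoT l) (dtFrom l).
Definition set_sentDS l b := LState (proposed l) (Sset l) (Tset l) (Uset l) (sentT l) b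
  (sentReady l) (sentC6 l) (sentC7 l) (delivered l) (rcvd l) (todoS l) (todoT l) (dtFrom l).
Definition set_sentReady l b := LState (proposed l) (Sset l) (Tset l) (Uset l) (sentT l) (sentDS l)
  b (sentC6 l) (sentC7 l) (delivered l) (rcvd l) (todoS l) (todoT l) (dtFrom l).
Definition set_sentC6 l b := LState (proposed l) (Sset l) (Tset l) (Uset l) (sentT l) (sentDS l)
  (sentReady l) b (sentC7 l) (delivered l) (rcvd l) (todoS l) (todoT l) (dtFrom l).
Definition set_sentC7 l b := LState (proposed l) (Sset l) (Tset l) (Uset l) (sentT l) (sentDS l)
  (sentReady l) (sentC6 l) b (delivered l) (rcvd l) (todoS l) (todoT l) (dtFrom l).
Definition set_delivered l d := LState (proposed l) (Sset l) (Tset l) (Uset l) (sentT l) (sentDS l)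
  (sentReady l) (sentC6 l) (sentC7 l) d (rcvd l) (todoS l) (todoT l) (dtFrom l).
Definition set_rcvd l r := LState (proposed l) (Sset l) (Tset l) (Uset l) (sentT l) (sentDS l)
  (sentReady l) (sentC6 l) (sentC7 l) (delivered l) r (todoS l) (todoT l) (dtFrom l).
Definition set_todoS l s := LState (proposed l) (Sset l) (Tset l) (Uset l) (sentT l) (sentDS l)
  (sentReady l) (sentC6 l) (sentC7 l) (delivered l) (rcvd l) s (todoT l) (dtFrom l).
Definition set_todoT l s := LState (proposed l) (Sset l) (Tset l) (Uset l) (sentT l) (sentDS l)
  (sentReady l) (sentC6 l) (sentC7 l) (delivered l) (rcvd l) (todoS l) s (dtFrom l).
Definition set_dtFrom l s := LState (proposed l) (Sset l) (Tset l) (Uset l) (sentT l) (sentDS l)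
  (sentReady l) (sentC6 l) (sentC7 l) (delivered l) (rcvd l) (todoS l) (todoT l) s.

Definition linit : lstate :=
  LState false [::] [::] [::] false false false false false None [::] [::] [::] [::].

(* global state: local states and the multiset of in-transit messages
   (sender, receiver, message) *)
Record gstate := GState {
  loc : P -> lstate;
  net : seq (P * P * msg)
}.

Definition ginit : gstate := GState (fun _ => linit) [::].

Inductive action :=
| AProp of P                       (* (1) ag-propose(x_i), i.e. arb-broadcast (p_i, x_i) *)
| AArbDel of P & P & (P * V)       (* p_i arb-delivers m from p_j (then handler (2)) *)
| ADistS of P & {set P}            (* (3) with witness quorum *)
| AHandleS of P & P & seq (P * V)
| AReady of P & {set P}
| AConf6 of P & {set P}
| AConf7 of P & {set P}            (* (7) with witness kernel *)
| ADistT of P & {set P}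
| AHandleT of P & P & seq (P * V)
| ADeliver of P & {set P}
| ARecv of P & P & msg             (* link delivers to p_i a message from p_k *)
| AByz of P & P & msg              (* faulty p_k sends an arbitrary message to p_i *)
| AIdle.

Definition sendall (i : P) (m : msg) : seq (P * P * msg) :=
  [seq (i, k, m) | k <- enum P].

Definition upd (g : gstate) (i : P) (l : lstate) (out : seq (P * P * msg)) : gstate :=
  GState (fun k => if k == i then l else loc g k) (net g ++ out).

Definition on_receive (l : lstate) (k : P) (m : msg) : lstate :=
  let l' := set_rcvd l ((k, m) :: rcvd l) in
  match m with
  | MDistS s => set_todoS l' (rcons (todoS l) (k, s))
  | MDistT s => set_todoT l' (rcons (todoT l) (k, s))
  | _ => l'
  end.

Section Step.
Variables (Qs : P -> {set {set P}}) (F : {set P}).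

Inductive step (g : gstate) : action -> gstate -> Prop :=
| st_prop i : i \notin F -> ~~ proposed (loc g i) ->
    step g (AProp i) (upd g i (set_proposed (loc g i) true) [::])
| st_arbdel i j (m : P * V) : i \notin F ->
    step g (AArbDel i j m)
      (upd g i (if m.1 == j then set_S (loc g i) (rcons (Sset (loc g i)) m)
                else loc g i) [::])
| st_distS i Q : i \notin F -> Q \in Qs i ->
    (forall j, j \in Q -> has (fun p : P * V => p.1 == j) (Sset (loc g i))) ->
    ~~ sentDS (loc g i) ->
    step g (ADistS i Q)
      (upd g i (set_sentDS (loc g i) true) (sendall i (MDistS (Sset (loc g i)))))
| st_handleS i k s s1 s2 : i \notin F ->
    todoS (loc g i) = s1 ++ (k, s) :: s2 ->
    all (fun p => p \in Sset (loc g i)) s ->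
    step g (AHandleS i k s)
      (if sentT (loc g i)
       then upd g i (set_todoS (loc g i) (s1 ++ s2)) [::]
       else upd g i (set_T (set_todoS (loc g i) (s1 ++ s2)) (Tset (loc g i) ++ s))
                [:: (i, k, MAck)])
| st_ready i Q : i \notin F -> Q \in Qs i ->
    (forall k, k \in Q -> List.In (k, MAck) (rcvd (loc g i))) ->
    ~~ sentReady (loc g i) ->
    step g (AReady i Q) (upd g i (set_sentReady (loc g i) true) (sendall i MReady))
| st_conf6 i Q : i \notin F -> Q \in Qs i ->
    (forall k, k \in Q -> List.In (k, MReady) (rcvd (loc g i))) ->
    ~~ sentC6 (loc g i) ->
    step g (AConf6 i Q) (upd g i (set_sentC6 (loc g i) true) (sendall i MConfirm))
| st_conf7 i K : i \notin F -> kernel Qs i K ->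
    (forall k, k \in K -> List.In (k, MConfirm) (rcvd (loc g i))) ->
    ~~ sentC7 (loc g i) ->
    step g (AConf7 i K) (upd g i (set_sentC7 (loc g i) true) (sendall i MConfirm))
| st_distT i Q : i \notin F -> Q \in Qs i ->
    (forall k, k \in Q -> List.In (k, MConfirm) (rcvd (loc g i))) ->
    ~~ sentT (loc g i) ->
    step g (ADistT i Q)
      (upd g i (set_sentT (loc g i) true) (sendall i (MDistT (Tset (loc g i)))))
| st_handleT i k t t1 t2 : i \notin F ->
    todoT (loc g i) = t1 ++ (k, t) :: t2 ->
    all (fun p => p \in Sset (loc g i)) t ->
    step g (AHandleT i k t)
      (upd g i (set_dtFrom (set_U (set_todoT (loc g i) (t1 ++ t2)) (Uset (loc g i) ++ t))
                           (k :: dtFrom (loc g i))) [::])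
| st_deliver i Q : i \notin F -> Q \in Qs i ->
    (forall k, k \in Q -> k \in dtFrom (loc g i)) ->
    delivered (loc g i) = None ->
    step g (ADeliver i Q) (upd g i (set_delivered (loc g i) (Some (Uset (loc g i)))) [::])
| st_recv i k m n1 n2 : i \notin F ->
    net g = n1 ++ (k, i, m) :: n2 ->
    step g (ARecv i k m)
      (GState (fun j => if j == i then on_receive (loc g i) k m else loc g j) (n1 ++ n2))
| st_byz k i m : k \in F ->
    step g (AByz k i m) (GState (loc g) (net g ++ [:: (k, i, m)]))
| st_idle : step g AIdle g.

End Step.

Definition is_exec (Qs : P -> {set {set P}}) (F : {set P})
    (ex : nat -> gstate) (lab : nat -> action) : Prop :=
  ex 0 = ginit /\ forall t, step Qs F (ex t) (lab t) (ex t.+1).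

(* p_j ag-proposed v (the input of correct p_j is x j) *)
Definition ag_proposed (x : P -> V) (lab : nat -> action) (j : P) (v : V) : Prop :=
  exists t, lab t = AProp j /\ v = x j.

(* arb-broadcast of m by p_j happens exactly at the ag-propose step (1) *)
Definition arb_broadcast (x : P -> V) (lab : nat -> action) (j : P) (m : P * V) : Prop :=
  exists t, lab t = AProp j /\ m = (j, x j).

(* Specification of asymmetric reliable broadcast (the environment oracle) *)
Definition arb_spec (Fs Qs : P -> {set {set P}}) (F : {set P}) (x : P -> V)
    (lab : nat -> action) : Prop :=
  let G := Gmax Fs Qs F in
  (forall j m, j \notin F -> arb_broadcast x lab j m ->
     forall i, i \in G -> exists t, lab t = AArbDel i j m)
  /\ (forall i i' j m m' t t', i \in G -> i' \in G ->
        lab t = AArbDel i j m -> lab t' = AArbDel i' j m' -> m = m')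
  /\ (forall i j m t, i \in G -> lab t = AArbDel i j m ->
        forall i', i' \in G -> exists t' m', lab t' = AArbDel i' j m')
  /\ (forall i j m m' t t', i \notin F ->
        lab t = AArbDel i j m -> lab t' = AArbDel i j m' -> t = t')
  /\ (forall i j m t, i \notin F -> j \notin F -> lab t = AArbDel i j m ->
        exists2 t', t' < t & lab t' = AProp j /\ m = (j, x j)).

Definition reliable_links (F : {set P}) (ex : nat -> gstate) (lab : nat -> action) : Prop :=
  forall t k i m, k \notin F -> i \notin F -> List.In (k, i, m) (net (ex t)) ->
    exists2 t', t <= t' & lab t' = ARecv i k m.

(* each correct process invokes ag-propose (exactly once: enforced by step (1)) *)
Definition all_propose (F : {set P}) (lab : nat -> action) : Prop :=
  forall i, i \notin F -> exists t, lab t = AProp i.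

Definition ag_delivers (ex : nat -> gstate) (i : P) (U : seq (P * V)) : Prop :=
  exists t, delivered (loc (ex t) i) = Some U.

Definition common_core (Fs Qs : P -> {set {set P}}) (F : {set P}) (x : P -> V)
    (ex : nat -> gstate) (lab : nat -> action) : Prop :=
  exists (i0 : P) (Q : {set P}) (f : P -> V),
    [/\ i0 \in Gmax Fs Qs F, Q \in Qs i0,
        (* S+ = {(p_j, f j) | p_j \in Q} consists of the ag-proposed values *)
        (forall j, j \in Q -> j \notin F -> ag_proposed x lab j (f j)) &
        (forall i U, i \in Gmax Fs Qs F -> ag_delivers ex i U ->
           forall j, j \in Q -> (j, f j) \in U)].

Definition ag_validity (Fs Qs : P -> {set {set P}}) (F : {set P}) (x : P -> V)
    (ex : nat -> gstate) (lab : nat -> action) : Prop :=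
  forall i U j v, i \in Gmax Fs Qs F -> ag_delivers ex i U -> (j, v) \in U ->
    wise Fs F j -> ag_proposed x lab j v.

Definition ag_agreement (Fs Qs : P -> {set {set P}}) (F : {set P})
    (ex : nat -> gstate) : Prop :=
  forall i i' U U' j v v', i \in Gmax Fs Qs F -> i' \in Gmax Fs Qs F ->
    ag_delivers ex i U -> ag_delivers ex i' U' -> (j, v) \in U -> (j, v') \in U' ->
    v = v'.

End Model.

(* Main.v *)
Require Import Defs.
From Stdlib Require Import Classical.
From mathcomp Require Import all_boot.
Unset Printing Implicit Defensive.

Lemma lt_up (Pr : nat -> Prop) t : (exists2 t0, t0 < t & Pr t0) -> exists2 t0, t0 < t.+1 & Pr t0.
Proof. by case=> t0 H1 H2; exists t0 => //; apply: ltnW. Qed.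

Lemma lift (p : nat -> Prop) : (forall t, p t -> p t.+1) -> forall t t', t <= t' -> p t -> p t'.
Proof.
move=> H t t' /subnK <-; elim: (t' - t) => [|d IH]; first by rewrite add0n.
by move/IH; rewrite addSn; apply: H.
Qed.

Lemma lift_sub (T : eqType) (f : nat -> seq T) :
  (forall t, {subset f t <= f t.+1}) -> forall t t', t <= t' -> {subset f t <= f t'}.
Proof.
move=> H t t' Ht; apply: (@lift (fun t' => {subset f t <= f t'}) _ t t' Ht) => //.
by move=> t1 H1 y /H1; apply: H.
Qed.

Lemma lift_b (f : nat -> bool) :
  (forall t, f t -> f t.+1) -> forall t t', t <= t' -> f t -> f t'.
Proof. move=> H t t' Ht; exact: (@lift (fun t => f t) H t t' Ht). Qed.

Lemma In_cat {T : Type} {a : T} {s1 s2} :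
  List.In a (s1 ++ s2) <-> List.In a s1 \/ List.In a s2.
Proof. elim: s1 => [|b s1 IH] /=; [tauto | rewrite IH; tauto]. Qed.

Lemma In_map {T U : Type} {f : T -> U} {y s} :
  List.In y (map f s) -> exists x, y = f x.
Proof. elim: s => [|b s IH] //= [<-|/IH//]; by exists b. Qed.

Lemma ltS a b : a < b -> a < b.+1.
Proof. move=> H; exact: ltnW. Qed.

Lemma pick_pair {n : nat} {V : eqType} {j : 'I_n} (d : V) {s : seq ('I_n * V)} :
  has (fun p => p.1 == j) s ->
  (j, (nth (j, d) s (find (fun p => p.1 == j) s)).2) \in s.
Proof.
move=> H; have Hn := nth_find (j, d) H.
have Hf := H; rewrite has_find in Hf.
have Hm := mem_nth (j, d) Hf.
move: Hm Hn; case: (nth _ _ _) => a b /= Hm /eqP Ea.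
by rewrite -Ea.
Qed.

Section Proofs.
Variables (n : nat) (V : eqType) (Fs Qs : 'I_n -> {set {set 'I_n}})
    (F : {set 'I_n}) (x : 'I_n -> V)
    (ex : nat -> gstate n V) (lab : nat -> action n V).
Hypothesis Hinit : ex 0 = ginit n V.
Hypothesis Hstep : forall t, step Qs F (ex t) (lab t) (ex t.+1).

Ltac stepcase0 t :=
  let Hs := fresh "Hs" in
  have Hs := Hstep t;
  let g := fresh "g" in let Eg := fresh "Eg" in
  let a := fresh "a" in let Ea := fresh "Ea" in
  let g' := fresh "g'" in let Eg' := fresh "Eg'" in
  remember (ex t.+1) as g' eqn:Eg';
  remember (ex t) as g eqn:Eg; remember (lab t) as a eqn:Ea;
  destruct Hs; subst g;
  try match goal with |- context [if sentT ?l then _ else _] =>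
     let Est := fresh "Est" in case Est: (sentT l) end;
  try match goal with |- context [if ?b then set_S _ _ else _] =>
     let E := fresh "Earb" in case E: b end;
  try match goal with |- context [on_receive ?l ?k ?m] => rewrite /on_receive; destruct m end;
  rewrite /upd /=.

Ltac stepcase t := stepcase0 t; try (case: eqP => [?|?]; [subst|]); simpl.

Lemma S_hist i j v t : (j,v) \in Sset (loc (ex t) i) ->
  exists2 t0, t0 < t & lab t0 = AArbDel i j (j,v).
Proof.
elim: t => [|t IH]; first by rewrite Hinit.
stepcase t; try by move/IH/lt_up.
rewrite /= mem_rcons inE => /orP [/eqP Em|/IH/lt_up//].
by exists t => //; move/eqP: Earb => E; rewrite -Ea -E -Em.
Qed.

Lemma S_mono1 i t : {subset Sset (loc (ex t) i) <= Sset (loc (ex t.+1) i)}.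
Proof.
stepcase t => //.
by move=> y Hy; rewrite mem_rcons inE Hy orbT.
Qed.

Lemma S_mono i t t' : t <= t' -> {subset Sset (loc (ex t) i) <= Sset (loc (ex t') i)}.
Proof. exact: (@lift_sub _ (fun t => Sset (loc (ex t) i)) (S_mono1 i)). Qed.

Lemma T_mono1 i t : {subset Tset (loc (ex t) i) <= Tset (loc (ex t.+1) i)}.
Proof.
stepcase t => //.
by move=> y /= Hy; rewrite mem_cat Hy.
Qed.

Lemma T_mono i t t' : t <= t' -> {subset Tset (loc (ex t) i) <= Tset (loc (ex t') i)}.
Proof. exact: (@lift_sub _ (fun t => Tset (loc (ex t) i)) (T_mono1 i)). Qed.

Lemma U_mono1 i t : {subset Uset (loc (ex t) i) <= Uset (loc (ex t.+1) i)}.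
Proof.
stepcase t => //.
by move=> y /= Hy; rewrite mem_cat Hy.
Qed.

Lemma U_mono i t t' : t <= t' -> {subset Uset (loc (ex t) i) <= Uset (loc (ex t') i)}.
Proof. exact: (@lift_sub _ (fun t => Uset (loc (ex t) i)) (U_mono1 i)). Qed.

Lemma sentT_mono1 i t : sentT (loc (ex t) i) -> sentT (loc (ex t.+1) i).
Proof. by stepcase t. Qed.

Lemma sentT_mono i t t' : t <= t' -> sentT (loc (ex t) i) -> sentT (loc (ex t') i).
Proof. exact: (lift_b (fun t => sentT (loc (ex t) i)) (sentT_mono1 i)). Qed.

Lemma sentDS_mono1 i t : sentDS (loc (ex t) i) -> sentDS (loc (ex t.+1) i).
Proof. by stepcase t. Qed.

Lemma sentDS_mono i t t' : t <= t' -> sentDS (loc (ex t) i) -> sentDS (loc (ex t') i).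
Proof. exact: (lift_b (fun t => sentDS (loc (ex t) i)) (sentDS_mono1 i)). Qed.


Lemma U_sub_S i t : {subset Uset (loc (ex t) i) <= Sset (loc (ex t) i)}.
Proof.
elim: t => [|t IH]; first by rewrite Hinit.
stepcase t; try exact: IH.
- by move=> y /IH Hy; rewrite mem_rcons inE Hy orbT.
- move=> y /=; rewrite mem_cat => /orP [/IH //|]. by move/allP: H1 => H1 /H1.
Qed.

Lemma todoT_rcvd i t p : p \in todoT (loc (ex t) i) ->
  List.In (p.1, MDistT p.2) (rcvd (loc (ex t) i)).
Proof.
elim: t => [|t IH]; first by rewrite Hinit.
stepcase t; try exact: IH.
all: try by move/IH; right.
- move=> Hp; apply: IH; rewrite H0 mem_cat inE; move: Hp; rewrite mem_cat.
  by case/orP => ->; rewrite ?orbT.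
- rewrite mem_rcons inE => /orP [/eqP -> /=|/IH]; [by left | by right].
Qed.

Lemma todoS_rcvd i t p : p \in todoS (loc (ex t) i) ->
  List.In (p.1, MDistS p.2) (rcvd (loc (ex t) i)).
Proof.
elim: t => [|t IH]; first by rewrite Hinit.
stepcase t; try exact: IH.
all: try by move/IH; right.
- move=> Hp; apply: IH; rewrite H0 mem_cat inE; move: Hp; rewrite mem_cat.
  by case/orP => ->; rewrite ?orbT.
- move=> Hp; apply: IH; rewrite H0 mem_cat inE; move: Hp; rewrite mem_cat.
  by case/orP => ->; rewrite ?orbT.
- rewrite mem_rcons inE => /orP [/eqP -> /=|/IH]; [by left | by right].
Qed.


Lemma rcvd_hist i k m t : List.In (k, m) (rcvd (loc (ex t) i)) ->
  exists2 t0, t0 < t & List.In (k, i, m) (net (ex t0)).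
Proof.
elim: t => [|t IH]; first by rewrite Hinit.
stepcase t; try by move/IH/lt_up.
all: case=> [[<- <-]|/IH/lt_up//]; exists t => //; rewrite H0;
  by apply: List.in_or_app; right; left.
Qed.

Definition sends_at t0 k (i : 'I_n) (m : msg n V) : Prop :=
  match m with
  | MDistS s => exists Q, lab t0 = ADistS _ k Q /\ s = Sset (loc (ex t0) k)
  | MAck => exists s, lab t0 = AHandleS k i s /\ sentT (loc (ex t0) k) = false
  | MReady => exists A, lab t0 = AReady _ k A
  | MConfirm => (exists Q, lab t0 = AConf6 _ k Q) \/ (exists K, lab t0 = AConf7 _ k K)
  | MDistT u => exists Q, lab t0 = ADistT _ k Q /\ u = Tset (loc (ex t0) k)
  end.

Lemma net_hist k i m t : k \notin F -> List.In (k, i, m) (net (ex t)) ->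
  exists2 t0, t0 < t & sends_at t0 k i m.
Proof.
move=> kF; elim: t => [|t IH]; first by rewrite Hinit.
stepcase0 t; try by move/IH/lt_up.
all: try (move/In_cat => [/IH/lt_up //|]).
all: try by [].
all: try (rewrite /sendall => /In_map [k1 E]; case: E => Ek _ Em; subst; exists t => //=; by eauto).
all: try (move=> Hin; apply/lt_up/IH; rewrite H0; apply/In_cat;
  by case: (In_cat.1 Hin) => [|?]; [left|right; right]).
- case=> // E; case: E => Ek Ei Em; subst; exists t => //=; exists s; split => //; by rewrite -Ea.
- case=> // E; case: E => Ek _ _; subst; by rewrite H in kF.
Qed.


Lemma del_hist i U t : delivered (loc (ex t) i) = Some U ->
  exists t1 Q, [/\ t1 < t, lab t1 = ADeliver _ i Q, Q \in Qs i,
    (forall k, k \in Q -> k \in dtFrom (loc (ex t1) i)) & U = Uset (loc (ex t1) i)].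
Proof.
elim: t => [|t IH]; first by rewrite Hinit.
stepcase t; try by move/IH => [tq [Qq [Hq1 Hq2 Hq3 Hq4 Hq5]]]; exists tq, Qq; split => //; apply: ltS.
case=> <-; exists t, Q; split => //.
Qed.

Lemma dt_hist i k t : k \in dtFrom (loc (ex t) i) ->
  exists t2 u, [/\ t2 < t, lab t2 = AHandleT i k u,
    {subset u <= Uset (loc (ex t2.+1) i)} & (k, u) \in todoT (loc (ex t2) i)].
Proof.
elim: t => [|t IH]; first by rewrite Hinit.
stepcase t; try by move/IH => [tq [Qq [Hq1 Hq2 Hq3 Hq4]]]; exists tq, Qq; split => //; apply: ltS.
rewrite inE => /orP [/eqP ->|/IH [tq [Qq [Hq1 Hq2 Hq3 Hq4]]]]; last first.
  by exists tq, Qq; split => //; apply: ltS.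
exists t, t0; split => //.
- by rewrite -Eg' /upd /= eqxx /= => y Hy; rewrite mem_cat Hy orbT.
- by rewrite H0 mem_cat inE eqxx orbT.
Qed.



Lemma inv_distS t i Q : lab t = ADistS _ i Q ->
  [/\ i \notin F, Q \in Qs i,
      (forall j, j \in Q -> has (fun p : 'I_n * V => p.1 == j) (Sset (loc (ex t) i))),
      sentDS (loc (ex t) i) = false & sentDS (loc (ex t.+1) i)].
Proof. move=> Hl; stepcase0 t; try discriminate Hl; case: Hl => ? ?; subst; rewrite eqxx; split => //; exact: negbTE. Qed.

Lemma inv_ready t i A : lab t = AReady _ i A ->
  A \in Qs i /\ (forall k, k \in A -> List.In (k, MAck n V) (rcvd (loc (ex t) i))).
Proof. move=> Hl; by stepcase0 t; try discriminate Hl; case: Hl => ? ?; subst. Qed.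

Lemma inv_conf6 t i Q : lab t = AConf6 _ i Q ->
  Q \in Qs i /\ (forall k, k \in Q -> List.In (k, MReady n V) (rcvd (loc (ex t) i))).
Proof. move=> Hl; by stepcase0 t; try discriminate Hl; case: Hl => ? ?; subst. Qed.

Lemma inv_conf7 t i K : lab t = AConf7 _ i K ->
  kernel Qs i K /\ (forall k, k \in K -> List.In (k, MConfirm n V) (rcvd (loc (ex t) i))).
Proof. move=> Hl; by stepcase0 t; try discriminate Hl; case: Hl => ? ?; subst. Qed.

Lemma inv_distT t i Q : lab t = ADistT _ i Q ->
  [/\ Q \in Qs i, (forall k, k \in Q -> List.In (k, MConfirm n V) (rcvd (loc (ex t) i))),
      sentT (loc (ex t) i) = false & sentT (loc (ex t.+1) i)].
Proof. move=> Hl; stepcase0 t; try discriminate Hl; case: Hl => ? ?; subst; rewrite eqxx; split => //; exact: negbTE. Qed.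

Lemma inv_handleS t i k s : lab t = AHandleS i k s -> sentT (loc (ex t) i) = false ->
  (k, s) \in todoS (loc (ex t) i) /\ Tset (loc (ex t.+1) i) = Tset (loc (ex t) i) ++ s.
Proof.
move=> Hl; stepcase0 t; try discriminate Hl; case: Hl => ? ? ?; subst.
- by rewrite Est.
- by rewrite eqxx H0 mem_cat inE eqxx orbT.
Qed.

Lemma DS_unique t1 t2 i Q1 Q2 : lab t1 = ADistS _ i Q1 -> lab t2 = ADistS _ i Q2 -> t1 = t2.
Proof.
wlog: t1 t2 Q1 Q2 / t1 <= t2.
  move=> W H1 H2; case: (leqP t1 t2) => Ht; first exact: W H1 H2.
  by apply/esym; apply: W H2 H1; apply: ltnW.
move=> Ht H1 H2; rewrite leq_eqVlt in Ht; case/orP: Ht => [/eqP //|Ht].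
case: (inv_distS _ _ _ H1) => _ _ _ _ S1; case: (inv_distS _ _ _ H2) => _ _ _ S2 _.
by move: (sentDS_mono _ _ _ Ht S1); rewrite S2.
Qed.


Notation GM := (Gmax Fs Qs F).

Lemma Gmax_guild {i} : i \in GM -> wise Fs F i /\ exists2 Q, Q \in Qs i & Q \subset GM.
Proof.
rewrite inE => /existsP [G /andP [Hg iG]]; move: (Hg) => /andP [/forallP W /forallP Qg].
split; first exact: (implyP (W i)) iG.
have /existsP [Q /andP [QQ QG]] := implyP (Qg i) iG.
exists Q => //; apply/subsetP => k kQ; rewrite inE; apply/existsP; exists G.
by rewrite Hg (subsetP QG).
Qed.

Lemma Gmax_notF {i} : i \in GM -> i \notin F.
Proof. by case/Gmax_guild => /andP []. Qed.

Lemma Gmax_star {i} : i \in GM -> F \in star (Fs i).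
Proof. by case/Gmax_guild => /andP []. Qed.

Hypothesis Hq : asym_quorum_system Fs Qs.

Lemma Gmax_meet {i Q} : i \in GM -> Q \in Qs i -> exists k, [/\ k \in Q, k \in GM & k \notin F].
Proof.
move=> iG QQ; case: (Gmax_guild iG) => _ [Qg Qgi QgG].
have := (proj1 Hq) i i Q Qg F QQ Qgi (Gmax_star iG) (Gmax_star iG).
case/subsetPn => k; rewrite inE => /andP [kQ kQg] kF.
by exists k; split => //; apply: (subsetP QgG).
Qed.

Lemma Gmax_kernel {i K} : i \in GM -> kernel Qs i K -> exists2 k, k \in K & k \in GM.
Proof.
move=> iG /forallP KK; case: (Gmax_guild iG) => _ [Qg Qgi QgG].
have /set0Pn [k] := implyP (KK Qg) Qgi; rewrite inE => /andP [kK kQg].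
by exists k => //; apply: (subsetP QgG).
Qed.

Lemma two_meet {i i0 Q A} : i \in GM -> i0 \in GM -> Q \in Qs i -> A \in Qs i0 ->
  exists k, [/\ k \in Q, k \in A & k \notin F].
Proof.
move=> iG i0G QQ AA.
have := (proj1 Hq) i i0 Q A F QQ AA (Gmax_star iG) (Gmax_star i0G).
case/subsetPn => k; rewrite inE => /andP [kQ kA] kF.
by exists k.
Qed.

Lemma recv_sent {i k m t} : k \notin F -> List.In (k, m) (rcvd (loc (ex t) i)) ->
  exists2 t0, t0 < t & sends_at t0 k i m.
Proof.
move=> kF /rcvd_hist [t1 lt1 /(net_hist _ _ _ _ kF)] [t0 lt0 H].
by exists t0 => //; apply: ltn_trans lt0 lt1.
Qed.

Lemma confirm_chain t m : m \in GM ->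
  (exists Q, lab t = AConf6 _ m Q) \/ (exists K, lab t = AConf7 _ m K) ->
  exists r A tr, r \in GM /\ lab tr = AReady _ r A.
Proof.
elim/ltn_ind: t m => t IH m mG [[Q HQ]|[K HK]].
- case: (inv_conf6 _ _ _ HQ) => QQ Hr.
  have [k [kQ kG kF]] := Gmax_meet mG QQ.
  have [t0 _ [A HA]] := recv_sent kF (Hr k kQ).
  by exists k, A, t0.
- case: (inv_conf7 _ _ _ HK) => KK Hc.
  have [k kK kG] := Gmax_kernel mG KK.
  have [t0 lt0 Hs] := recv_sent (Gmax_notF kG) (Hc k kK).
  exact: IH t0 lt0 k kG Hs.
Qed.

Lemma ready_exists i U t : i \in GM -> delivered (loc (ex t) i) = Some U ->
  exists r A tr, r \in GM /\ lab tr = AReady _ r A.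
Proof.
move=> iG /del_hist [t1 [Q [_ _ QQ Hdt _]]].
have [k [kQ kG kF]] := Gmax_meet iG QQ.
have [t2 [u [_ _ _ /todoT_rcvd /= Hin]]] := dt_hist _ _ _ (Hdt k kQ).
have [t3 _ [Q3 [H3 _]]] := recv_sent kF Hin.
case: (inv_distT _ _ _ H3) => Q3Q Hc _ _.
have [c [cQ cG cF]] := Gmax_meet kG Q3Q.
have [t4 _ Hs] := recv_sent cF (Hc c cQ).
exact: confirm_chain _ _ cG Hs.
Qed.


Lemma core i U t r A tr : i \in GM -> r \in GM -> lab tr = AReady _ r A ->
  delivered (loc (ex t) i) = Some U ->
  exists tD QD, lab tD = ADistS _ r QD /\ {subset Sset (loc (ex tD) r) <= U}.
Proof.
move=> iG rG Hr /del_hist [t1 [Qi [_ _ QQ Hdt ->]]].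
case: (inv_ready _ _ _ Hr) => AA Hack.
have [k [kQ kA kF]] := two_meet iG rG QQ AA.
have [t2 [u [lt2 _ Hu /todoT_rcvd /= Hin]]] := dt_hist _ _ _ (Hdt k kQ).
have [t3 _ [Q3 [H3 Eu]]] := recv_sent kF Hin.
have [t4 _ [s [H4 S4]]] := recv_sent kF (Hack k kA).
case: (inv_handleS _ _ _ _ H4 S4) => Hts ET.
move: (todoS_rcvd _ _ _ Hts) => /= Hin2.
have [t5 _ [Q5 [H5 Es]]] := recv_sent (Gmax_notF rG) Hin2.
exists t5, Q5; split => //.
case: (inv_distT _ _ _ H3) => _ _ ST3 ST3'.
have lt43 : t4 < t3.
  case: (ltngtP t4 t3) => // [lt34|E34].
  - by have := sentT_mono k t3.+1 t4 lt34 ST3'; rewrite S4.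
  - by move: H4; rewrite E34 H3.
move=> y; rewrite -Es => ys.
apply: (U_mono i t2.+1 t1 lt2); apply: Hu; rewrite Eu.
by apply: (T_mono k t4.+1 t3 lt43); rewrite ET mem_cat ys orbT.
Qed.


Hypothesis Hg : with_guild Fs Qs F.
Hypothesis Ha : arb_spec Fs Qs F x lab.
Hypothesis Hp : all_propose F lab.

Lemma U_origin i U t j v : i \in GM -> delivered (loc (ex t) i) = Some U -> (j, v) \in U ->
  exists t0, lab t0 = AArbDel i j (j, v).
Proof.
move=> iG /del_hist [t1 [_ [_ _ _ _ ->]]] /U_sub_S /S_hist [t0 _ H].
by exists t0.
Qed.

Lemma main : common_core Fs Qs F x ex lab /\ ag_validity Fs Qs F x ex lab /\ ag_agreement Fs Qs F ex.
Proof.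
case: Ha => _ [Hcons [_ [_ Hinteg]]].
split; [|split].
- case: (classic (exists i U t, i \in GM /\ delivered (loc (ex t) i) = Some U)).
  + move=> [i [U [t [iG Hd]]]].
    have [r [A [tr [rG Hr]]]] := ready_exists _ _ _ iG Hd.
    have [tD [QD [H5 Hsub]]] := core _ _ _ _ _ _ iG rG Hr Hd.
    case: (inv_distS _ _ _ H5) => _ QDQ Hhas _ _.
    pose f j := (nth (j, x j) (Sset (loc (ex tD) r))
                   (find (fun p => p.1 == j) (Sset (loc (ex tD) r)))).2.
    exists r, QD, f; split => //.
    * move=> j jQ jF.
      have Hin := pick_pair (x j) (Hhas j jQ).
      have [t0 _ H0] := S_hist _ _ _ _ Hin.
      have [t' _ [Ht' Eq]] := Hinteg _ _ _ _ (Gmax_notF rG) jF H0.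
      by exists t'; split => //; case: Eq.
    * move=> i' U' i'G [t' Hd'] j jQ.
      have [tD' [QD' [H5' Hsub']]] := core _ _ _ _ _ _ i'G rG Hr Hd'.
      have E := DS_unique _ _ _ _ _ H5 H5'; subst tD'.
      exact: Hsub' (pick_pair (x j) (Hhas j jQ)).
  + move=> Hno.
    case: Hg => G /andP [HG /set0Pn [i iG]].
    have iGM : i \in GM by rewrite inE; apply/existsP; exists G; rewrite HG iG.
    case: (Gmax_guild iGM) => _ [Q QQ _].
    exists i, Q, x; split => //.
    * move=> j _ jF; have [t Ht] := Hp j jF; by exists t.
    * move=> i' U' i'G [t' Hd']; exfalso; apply: Hno; by exists i', U', t'.
- move=> i U j v iG [t Hd] jv /andP [jF _].
  have [t0 H0] := U_origin _ _ _ _ _ iG Hd jv.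
  have [t' _ [Ht' Eq]] := Hinteg _ _ _ _ (Gmax_notF iG) jF H0.
  by exists t'; split => //; case: Eq.
- move=> i i' U U' j v v' iG i'G [t Hd] [t' Hd'] jv jv'.
  have [t0 H0] := U_origin _ _ _ _ _ iG Hd jv.
  have [t1 H1] := U_origin _ _ _ _ _ i'G Hd' jv'.
  by case: (Hcons _ _ _ _ _ _ _ iG i'G H0 H1).
Qed.

End Proofs.

Theorem lemma3p8 (n : nat) (V : eqType) (Fs Qs : 'I_n -> {set {set 'I_n}})
    (F : {set 'I_n}) (x : 'I_n -> V)
    (ex : nat -> gstate n V) (lab : nat -> action n V) :
  asym_quorum_system Fs Qs ->
  is_exec Qs F ex lab ->
  with_guild Fs Qs F ->
  arb_spec Fs Qs F x lab ->
  reliable_links F ex lab ->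
  all_propose F lab ->
  common_core Fs Qs F x ex lab /\ ag_validity Fs Qs F x ex lab /\ ag_agreement Fs Qs F ex.
Proof.
move=> Hq [Hi Hs] Hg Ha _ Hp.
exact: (@main n V Fs Qs F x ex lab Hi Hs Hq Hg Ha Hp).
Qed.
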